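(* Let $G\in\Gamma_0(\mathbb{R}^n)$ be partly smooth at $x^\star$ relative to an affine or linear manifold $\mathcal{M}_G$ (so $\mathcal{M}_G = x^\star + T$ with $T\eqdef T^G_{x^\star}$), and let $\widetilde{G}$ be a $C^2$ smooth representative of $G$ on $\mathcal{M}_G$ near $x^\star$. For $h\in\mathbb{R}^n$ let $x^\star_h \eqdef x^\star + P_{T} h$. Then, as $h\to 0$, \[ e_G^{x^\star_h} = e_G^{x^\star} + P_{T}\nabla^2\widetilde{G}(x^\star) P_{T} h + o(h), \] and moreover, for every $h\in\mathbb{R}^n$, \[ \big\langle P_{T}\nabla^2\widetilde{G}(x^\star)P_{T} h,\, h\big\rangle \geq 0 . \]
   Context: $\Gamma_0(\mathbb{R}^n)$: proper lsc convex functions. For $x$ with $\partial G(x)\neq\emptyset$, $T^G_x\eqdef \mathrm{Lin}(\partial G(x))^\perp$ ($\mathrm{Lin}(C)$ the subspace parallel to the affine hull of $C$) and $e_G^x \eqdef P_{T^G_x}(\partial G(x))$ (a singleton). $G$ is partly smooth at $x$ relative to $\mathcal{M}\ni x$ if $\mathcal{M}$ is a $C^2$-manifold around $x$ with $G|_{\mathcal{M}}$ $C^2$ near $x$, the tangent space of $\mathcal{M}$ at $x$ is $T^G_x$, and $\partial G$ is continuous at $x$ relative to $\mathcal{M}$. A $C^2$ smooth representative $\widetilde G$ is a $C^2$ function on a neighbourhood of $x^\star$ agreeing with $G$ on $\mathcal{M}_G$; $\nabla^2\widetilde G$ is its Euclidean Hessian. $P_T$ is the orthogonal projector onto $T$.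 *)

(* Defs.v *)
From HB Require Import structures.
From mathcomp Require Import all_boot all_order all_algebra.
From mathcomp Require Import all_classical all_reals all_analysis.
Set Implicit Arguments. Unset Strict Implicit. Unset Printing Implicit Defensive.
Import Order.TTheory GRing.Theory Num.Theory.
Import numFieldNormedType.Exports.
Local Open Scope classical_set_scope.
Local Open Scope ring_scope.

Section Defs.
Variables (R : realType) (n : nat).
Local Notation V := 'cV[R]_n.

Definition dot (u v : V) : R := \sum_(i < n) u i 0 * v i 0.

Definition ebasis (i : 'I_n) : V := delta_mx i 0.

Definition pder (f : V -> R) (i : 'I_n) : V -> R :=
  fun x => 'D_(ebasis i) f x.

Definition C2_on (U : set V) (f : V -> R) : Prop :=
  open U /\
  forall x, U x ->
    {for x, continuous f} /\
    (forall i, derivable f x (ebasis i) /\ {for x, continuous (pder f i)}) /\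
    (forall i j, derivable (pder f i) x (ebasis j) /\
                 {for x, continuous (pder (pder f i) j)}).

Definition hessian (f : V -> R) (x : V) : 'M[R]_n :=
  \matrix_(i, j) pder (pder f i) j x.

Definition convex_ext (G : V -> \bar R) : Prop :=
  forall (x y : V) (t : R), 0 <= t <= 1 ->
    (G (t *: x + (1 - t) *: y)%R <= t%:E * G x + (1 - t)%:E * G y)%E.

Definition proper_ext (G : V -> \bar R) : Prop :=
  (forall x, G x != -oo%E) /\ (exists x, G x \is a fin_num).

Definition Gamma0 (G : V -> \bar R) : Prop :=
  proper_ext G /\ lower_semicontinuous G /\ convex_ext G.

Definition subdiff (G : V -> \bar R) (x : V) (u : V) : Prop :=
  G x \is a fin_num /\
  forall y, (G x + (dot u (y - x)%R)%:E <= G y)%E.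

(* T^G_x = Lin(dG(x))^perp, where Lin(dG(x)) is spanned by the differences
   u1 - u2 of subgradients *)
Definition Tsp (G : V -> \bar R) (x : V) : set V :=
  [set v | forall u1 u2, subdiff G x u1 -> subdiff G x u2 -> dot (u1 - u2) v = 0].

Definition is_orth_proj (S : set V) (P : 'M[R]_n) : Prop :=
  P^T = P /\ P *m P = P /\ (forall v, S v <-> P *m v = v).

(* e_G^x = P_{T^G_x}(dG(x)) (the singleton's element; arbitrary (0) when
   dG(x) is empty, where it is undefined in the paper) *)
Definition eG (G : V -> \bar R) (x : V) : V :=
  xget 0 [set e | exists P u, is_orth_proj (Tsp G x) P /\ subdiff G x u /\ e = P *m u].

Definition subdiff_continuous_rel (G : V -> \bar R) (x : V) (M : set V) : Prop :=
  (forall u, subdiff G x u -> forall eps : R, 0 < eps ->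
     \forall y \near x, M y -> exists u', subdiff G y u' /\ `|u' - u| < eps) /\
  (forall (xk uk : nat -> V) (u : V),
     (forall k, M (xk k) /\ subdiff G (xk k) (uk k)) ->
     xk @ \oo --> x -> uk @ \oo --> u -> subdiff G x u).

Definition C2_representative (G : V -> \bar R) (Gt : V -> R) (x : V) (M : set V) : Prop :=
  exists U : set V, U x /\ C2_on U Gt /\ (forall y, U y -> M y -> G y = (Gt y)%:E).

Definition affine_manifold_of (G : V -> \bar R) (x : V) (M : set V) : Prop :=
  M = [set y | Tsp G x (y - x)].

(* An affine M is a C^2 manifold whose tangent space is its direction, so
   requiring M = x + T^G_x encodes both "M is a C^2 manifold around x" and
   "the tangent space of M at x is T^G_x". *)
Definition partly_smooth_affine (G : V -> \bar R) (x : V) (M : set V) : Prop :=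
  (exists u, subdiff G x u) /\
  affine_manifold_of G x M /\
  (exists Gt, C2_representative G Gt x M) /\
  subdiff_continuous_rel G x M.

End Defs.

(* Main.v *)
Require Import Defs.
From HB Require Import structures.
From mathcomp Require Import all_boot all_order all_algebra.
From mathcomp Require Import all_classical all_reals all_analysis.
From mathcomp Require Import ring lra.
Import Order.TTheory GRing.Theory Num.Theory.
Import numFieldNormedType.Exports.
Local Open Scope classical_set_scope.
Local Open Scope ring_scope.
Set Implicit Arguments. Unset Strict Implicit.

Section Aux.
Variable R : realType.

Lemma mnorm_ge p q (A : 'M[R]_(p, q)) i j : `|A i j| <= `|A|.
Proof.
rewrite [leRHS]/Num.Def.normr/= mx_normrE.
by apply/bigmax_geP; right; exists (i, j).
Qed.

Lemma mnorm_le p q (A : 'M[R]_(p, q)) c : 0 <= c -> (forall i j, `|A i j| <= c) -> `|A| <= c.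
Proof.
move=> c0 H; rewrite [leLHS]/Num.Def.normr/= mx_normrE.
by apply: bigmax_le => // -[i j] _; apply: H.
Qed.

Lemma near0P (V : normedModType R) (P : V -> Prop) :
  (\forall x \near (0 : V), P x) <-> exists2 e : R, 0 < e & forall x, `|x| < e -> P x.
Proof.
rewrite nbhs_norm0P; split => -[e e0 H]; exists e => //.
Qed.

Lemma nearxP (V : normedModType R) (x : V) (P : V -> Prop) :
  (\forall y \near x, P y) <-> exists2 e : R, 0 < e & forall y, `|x - y| < e -> P y.
Proof.
rewrite nbhs_normP; split => -[e e0 H]; exists e => //.
Qed.

End Aux.


Section Lin.
Variables (R : realType) (n : nat).
Local Notation V := 'cV[R]_n.

Lemma dotE (u v : V) : dot u v = (u^T *m v) 0 0.
Proof. by rewrite /dot mxE; apply: eq_bigr => i _; rewrite mxE. Qed.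

Lemma dotC (u v : V) : dot u v = dot v u.
Proof. by rewrite /dot; apply: eq_bigr => i _; rewrite mulrC. Qed.

Lemma dotDl (u w v : V) : dot (u + w) v = dot u v + dot w v.
Proof. by rewrite /dot -big_split; apply: eq_bigr => i _; rewrite mxE mulrDl. Qed.

Lemma dotNl (u v : V) : dot (- u) v = - dot u v.
Proof. by rewrite /dot -sumrN; apply: eq_bigr => i _; rewrite mxE mulNr. Qed.

Lemma dotBl (u w v : V) : dot (u - w) v = dot u v - dot w v.
Proof. by rewrite dotDl dotNl. Qed.

Lemma dotZl (a : R) (u v : V) : dot (a *: u) v = a * dot u v.
Proof. by rewrite /dot mulr_sumr; apply: eq_bigr => i _; rewrite mxE mulrA. Qed.

Lemma dotDr (u w v : V) : dot v (u + w) = dot v u + dot v w.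
Proof. by rewrite !(dotC v) dotDl. Qed.
Lemma dotBr (u w v : V) : dot v (u - w) = dot v u - dot v w.
Proof. by rewrite !(dotC v) dotBl. Qed.
Lemma dotZr (a : R) (u v : V) : dot v (a *: u) = a * dot v u.
Proof. by rewrite !(dotC v) dotZl. Qed.

Lemma dot_mx (A : 'M[R]_n) (u v : V) : dot u (A *m v) = dot (A^T *m u) v.
Proof. by rewrite !dotE trmx_mul trmxK mulmxA. Qed.

Lemma dot_e (u : V) i : dot u (ebasis R i) = u i 0.
Proof.
rewrite /dot (bigD1 i) //= big1 ?addr0; first by rewrite mxE !eqxx mulr1.
by move=> j ji; rewrite mxE (negbTE ji) mulr0.
Qed.

Lemma dot0P (x : V) : (forall w, dot x w = 0) -> x = 0.
Proof.
by move=> H; apply/matrixP => i j; rewrite (ord1 j) mxE -dot_e H.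
Qed.

Lemma dot_sym_proj (P : 'M[R]_n) (u v : V) : P^T = P -> dot (P *m u) v = dot u (P *m v).
Proof. by move=> PT; rewrite dot_mx PT. Qed.

Lemma dot_le (u v : V) : `|dot u v| <= n%:R * `|u| * `|v|.
Proof.
rewrite /dot; apply: le_trans (ler_norm_sum _ _ _) _.
apply: le_trans (_ : \sum_(i < n) `|u| * `|v| <= _).
  apply: ler_sum => i _; rewrite normrM; apply: ler_pM => //; exact: mnorm_ge.
by rewrite sumr_const card_ord -mulrA mulr_natl.
Qed.

Lemma mulmx_le p q (A : 'M[R]_(p, q)) (v : 'cV[R]_q) : `|A *m v| <= q%:R * `|A| * `|v|.
Proof.
apply: mnorm_le => [|i j]; first by rewrite !mulr_ge0.
rewrite (ord1 j) mxE; apply: le_trans (ler_norm_sum _ _ _) _.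
apply: le_trans (_ : \sum_(k < q) `|A| * `|v| <= _).
  apply: ler_sum => k _; rewrite normrM; apply: ler_pM => //; exact: mnorm_ge.
by rewrite sumr_const card_ord -mulrA mulr_natl.
Qed.

Lemma ebasis_coord (v : V) : v = \sum_(i < n) v i 0 *: ebasis R i.
Proof.
apply/matrixP => i j; rewrite (ord1 j) summxE (bigD1 i) //= big1 ?addr0.
  by rewrite !mxE !eqxx mulr1.
by move=> k ki; rewrite !mxE eq_sym (negbTE ki) mulr0.
Qed.

End Lin.


Section Proj.
Variables (R : realType) (n : nat).
Local Notation V := 'cV[R]_n.
Implicit Types (G : V -> \bar R) (S : set V) (P : 'M[R]_n).

Lemma mx_ext (A B : 'M[R]_n) : (forall v : V, A *m v = B *m v) -> A = B.
Proof.
move=> H; apply/matrixP => i j.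
have := congr1 (fun M : V => M i 0) (H (ebasis R j)).
have E (C : 'M[R]_n) : (C *m ebasis R j) i 0 = C i j.
  rewrite mxE (bigD1 j) //= big1 ?addr0; first by rewrite mxE !eqxx mulr1.
  by move=> k kj; rewrite mxE (negbTE kj) mulr0.
by rewrite !E.
Qed.

Lemma proj_range S P v : is_orth_proj S P -> S (P *m v).
Proof. by case=> _ [PP HS]; apply/HS; rewrite mulmxA PP. Qed.

Lemma proj_fix S P v : is_orth_proj S P -> S v -> P *m v = v.
Proof. by case=> _ [_ HS] /HS. Qed.

Lemma proj_unique S P P' : is_orth_proj S P -> is_orth_proj S P' -> P' = P.
Proof.
move=> hP hP'.
have E1 : P *m P' = P' by apply: mx_ext => v; rewrite -mulmxA (proj_fix hP) //; exact: proj_range hP'.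
have E2 : P' *m P = P by apply: mx_ext => v; rewrite -mulmxA (proj_fix hP') //; exact: proj_range hP.
case: hP => PT _; case: hP' => P'T _.
by rewrite -P'T -E1 trmx_mul PT P'T E2.
Qed.

Lemma Tsp0 G x : Tsp G x 0.
Proof. by move=> u1 u2 _ _; rewrite -(scale0r (0:V)) dotZr mul0r. Qed.

Lemma TspD G x v w : Tsp G x v -> Tsp G x w -> Tsp G x (v + w).
Proof. by move=> Hv Hw u1 u2 h1 h2; rewrite dotDr Hv // Hw // addr0. Qed.

Lemma TspZ G x a v : Tsp G x v -> Tsp G x (a *: v).
Proof. by move=> Hv u1 u2 h1 h2; rewrite dotZr Hv // mulr0. Qed.

Lemma TspB G x v w : Tsp G x v -> Tsp G x w -> Tsp G x (v - w).
Proof. by move=> Hv Hw; apply: TspD => //; rewrite -scaleN1r; apply: TspZ. Qed.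

Lemma proj_diff0 G x P u1 u2 : is_orth_proj (Tsp G x) P ->
  subdiff G x u1 -> subdiff G x u2 -> P *m (u1 - u2) = 0.
Proof.
move=> hP h1 h2; apply: dot0P => w.
have [PT _] := hP.
rewrite dot_sym_proj //; exact: (proj_range w hP).
Qed.

Lemma eG_eq G x P u : is_orth_proj (Tsp G x) P -> subdiff G x u -> eG G x = P *m u.
Proof.
move=> hP hu; apply: xget_unique; first by exists P, u.
move=> e [P' [u' [hP' [hu' ->]]]].
rewrite (proj_unique hP hP'); apply/eqP; rewrite -subr_eq0 -mulmxBr.
by apply/eqP; apply: proj_diff0 hP hu' hu.
Qed.

End Proj.


Section OneD.
Variable R : realType.

Lemma mvt_abs (phi df : R -> R) (c : R) :
  (forall s : R, `|s| <= `|c| -> is_derive s (1:R) phi (df s)) ->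
  exists2 xi, `|xi| <= `|c| & phi c - phi 0 = df xi * c.
Proof.
move=> H.
have cont : forall a b, `|a| <= `|c| -> `|b| <= `|c| -> {within `[a, b], continuous phi}.
  move=> a b ha hb; apply: derivable_within_continuous => s.
  rewrite in_itv /= => /andP[aS sB].
  have : `|s| <= `|c|.
    move: ha hb; rewrite !ler_norml => /andP[ha1 _] /andP[_ hb2].
    by rewrite (le_trans ha1 aS) (le_trans sB hb2).
  by move/H => [].
have [c0|c0] := leP 0 c.
- have D : forall s, s \in `]0, c[ -> is_derive s (1:R) phi (df s).
    move=> s; rewrite in_itv /= => /andP[h1 h2]; apply: H.
    by rewrite !gtr0_norm ?ltW // (lt_trans h1 h2).
  have C : {within `[0, c], continuous phi} by apply: cont; rewrite ?normr0.
  have [xi hxi E] := @MVT_segment R phi df 0 c c0 D C.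
  exists xi; last by rewrite E subr0.
  move: hxi; rewrite in_itv /= => /andP[h1 h2].
  by rewrite !ger0_norm.
- have D : forall s, s \in `]c, 0[ -> is_derive s (1:R) phi (df s).
    move=> s; rewrite in_itv /= => /andP[h1 h2]; apply: H.
    by rewrite (ltr0_norm h2) (ltr0_norm c0) lerN2 ltW.
  have C : {within `[c, 0], continuous phi} by apply: cont; rewrite ?normr0.
  have [xi hxi E] := @MVT_segment R phi df c 0 (ltW c0) D C.
  exists xi.
    move: hxi; rewrite in_itv /= => /andP[h1 h2].
    by rewrite !ler0_norm ?lerN2 // ltW.
  by rewrite -opprB E sub0r mulrN opprK.
Qed.

End OneD.


Section Expand.
Variables (R : realType) (n : nat).
Local Notation V := 'cV[R]_n.

Lemma line_derive (f : V -> R) (a v : V) (t : R) :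
  derivable f (a + t *: v) v ->
  is_derive t (1:R) (fun s => f (a + s *: v)) ('D_v f (a + t *: v)).
Proof.
move=> H.
have E : (fun h : R => h^-1 *: (((fun s => f (a + s *: v)) \o shift t) (h *: (1:R)) - f (a + t *: v)))
   = (fun h : R => h^-1 *: ((f \o shift (a + t *: v)) (h *: v) - f (a + t *: v))).
  apply/funext => h /=; congr (_ *: (f _ - _)).
  by rewrite [h *: 1]mulr1 scalerDl addrCA addrA.
split; first by rewrite /derivable E.
by rewrite /derive E.
Qed.


Definition trunc (k : nat) (d : V) : V := \col_i (if (i < k)%N then d i 0 else 0).

Lemma trunc0 d : trunc 0 d = 0.
Proof. by apply/matrixP => i j; rewrite !mxE. Qed.

Lemma truncn d : trunc n d = d.
Proof. by apply/matrixP => i j; rewrite !mxE ltn_ord (ord1 j). Qed.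

Lemma truncS (k : 'I_n) d : trunc k.+1 d = trunc k d + d k 0 *: ebasis R k.
Proof.
apply/matrixP => i j; rewrite /ebasis !mxE (ord1 j) eqxx andbT ltnS leq_eqVlt.
case: (eqVneq i k) => [->|ik]; first by rewrite eqxx ltnn mulr1 add0r.
have : (nat_of_ord i == k) = false by apply/negbTE; move: ik; apply: contra => /eqP h; apply/eqP/val_inj.
by move=> ->; rewrite /= mulr0 addr0.
Qed.

Lemma trunc_line_norm (i : 'I_n) (d : V) (s : R) :
  `|s| <= `|d i 0| -> `|trunc i d + s *: ebasis R i| <= `|d|.
Proof.
move=> hs; apply: mnorm_le => // a b.
rewrite /ebasis !mxE (ord1 b) eqxx andbT.
case: (eqVneq a i) => [->|ai].
  by rewrite ltnn mulr1 add0r (le_trans hs) // mnorm_ge.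
rewrite mulr0 addr0; case: ifP => _; first exact: mnorm_ge.
by rewrite normr0.
Qed.


Lemma expand (f : V -> R) (x : V) (r : R) : 0 < r ->
  (forall y, `|x - y| < r -> forall i, derivable f y (ebasis R i)) ->
  (forall i, {for x, continuous (pder f i)}) ->
  forall eps, 0 < eps -> exists2 del, 0 < del & forall d, `|d| < del ->
    `|f (x + d) - f x - \sum_i pder f i x * d i 0| <= eps * `|d|.
Proof.
move=> r0 Hd Hc eps e0.
pose e' := eps / (n.+1)%:R.
have e'0 : 0 < e' by rewrite divr_gt0.
have : \forall y \near x, forall i, `|pder f i x - pder f i y| < e'.
  apply: (@filter_forall _ _ (fun i y => `|pder f i x - pder f i y| < e') (nbhs x)) => i; have := Hc i; move/cvgr_dist_lt => /(_ _ e'0); exact.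
move/nearxP => [d0 d00 Hd0].
exists (Num.min d0 r); first by rewrite lt_min d00 r0.
move=> d; rewrite lt_min => /andP[hd0 hdr].
pose g k := f (x + trunc k d).
have := telescope_sumr g (leq0n n); rewrite big_mkord /g truncn trunc0 addr0 => <-.
rewrite -sumrB; apply: le_trans (ler_norm_sum _ _ _) _.
apply: le_trans (_ : \sum_(k < n) e' * `|d| <= _).
  apply: ler_sum => k _.
  rewrite truncS.
  pose a := x + trunc k d.
  pose phi s := f (a + s *: ebasis R k).
  have nb : forall s, `|s| <= `|d k 0| -> `|x - (a + s *: ebasis R k)| <= `|d|.
    move=> s hs; rewrite /a -addrA opprD addrA subrr sub0r normrN.
    exact: trunc_line_norm.
  have [xi hxi E] := @mvt_abs R phi (fun s => pder f k (a + s *: ebasis R k)) (d k 0)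
    (fun s hs => line_derive (Hd _ (le_lt_trans (nb s hs) hdr) k)).
  have -> : f (x + (trunc k d + d k 0 *: ebasis R k)) - f (x + trunc k d) = phi (d k 0) - phi 0.
    by rewrite /phi /a scale0r addr0 addrA.
  rewrite E -mulrBl normrM ler_pM //.
    rewrite distrC; apply: ltW; apply: Hd0.
    exact: le_lt_trans (nb _ hxi) hd0.
  exact: mnorm_ge.
rewrite sumr_const card_ord -mulr_natl mulrA ler_wpM2r // /e' mulrCA ger_pMr //.
by rewrite ler_pdivrMr ?ltr0n // mul1r ler_nat.
Qed.

End Expand.


Section Span.
Variables (R : realType) (n : nat).
Local Notation V := 'cV[R]_n.

Lemma finite_span (Dset : set V) : exists k (D : 'M[R]_(k, n)),
  (forall j, Dset (row j D)^T) /\ (forall d, Dset d -> (d^T <= D)%MS).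
Proof.
apply: contrapT => H.
have H' : forall k (D : 'M[R]_(k, n)), (forall j, Dset (row j D)^T) ->
    exists d, Dset d /\ ~~ (d^T <= D)%MS.
  move=> k D hD; apply: contrapT => nE; apply: H; exists k, D; split => // d hd.
  by apply: contrapT => /negP nd; apply: nE; exists d.
have ind : forall r, exists k (D : 'M[R]_(k, n)), (forall j, Dset (row j D)^T) /\ (r <= \rank D)%N.
  elim => [|r [k [D [hD hr]]]].
    by exists 0%N, 0; split => // -[].
  have [d [hd nd]] := H' k D hD.
  exists (k + 1)%N, (col_mx D d^T); split.
    move=> j; case: (split_ordP j) => j' -> .
      by rewrite rowKu.
    have E : row j' d^T = d^T by apply/matrixP => a b; rewrite !mxE (ord1 j') (ord1 a).
    by rewrite rowKd E trmxK.
  have sub : (D <= col_mx D d^T)%MS.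
    by have := submx_refl (col_mx D d^T); rewrite col_mx_sub => /andP[].
  have lt : (\rank D < \rank (col_mx D d^T))%N.
    rewrite (ltn_leqif (mxrank_leqif_sup sub)) col_mx_sub submx_refl /=.
    exact: nd.
  exact: leq_ltn_trans hr lt.
have [k [D [_ hr]]] := ind n.+1.
by have := rank_leq_col D; rewrite leqNgt hr.
Qed.


Lemma Q_factor k (Dset : set V) (D : 'M[R]_(k, n)) (S : set V) (P : 'M[R]_n) :
  (forall d, Dset d -> (d^T <= D)%MS) ->
  (forall v, (forall d, Dset d -> dot d v = 0) -> S v) ->
  is_orth_proj S P -> exists A : 'M[R]_(n, k), 1%:M - P = A *m D.
Proof.
move=> hD hS hP; apply/submxP; rewrite submxE.
have PX : P *m cokermx D = cokermx D.
  apply: mx_ext => v; rewrite -mulmxA (proj_fix hP) // ; apply: hS => d /hD /submxP [a ea].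
  by rewrite dotE ea mulmxA -(mulmxA a D) mulmx_coker mulmx0 mul0mx mxE.
by rewrite mulmxBl PX mul1mx subrr.
Qed.

End Span.


Lemma small0 (R : realType) (a : R) : (forall e, 0 < e -> `|a| <= e) -> a = 0.
Proof.
move=> H; apply/eqP; rewrite -normr_eq0; apply/eqP/le_anti; rewrite normr_ge0 andbT.
apply/ler_addgt0Pr => e e0; rewrite add0r; exact: H.
Qed.

Lemma dot0r (R : realType) n (u : 'cV[R]_n) : dot u 0 = 0.
Proof. by rewrite -(scale0r (0:'cV[R]_n)) dotZr mul0r. Qed.

Section Main.
Variables (R : realType) (n : nat).
Local Notation V := 'cV[R]_n.
Variables (G : V -> \bar R) (xs : V) (M : set V) (Gt : V -> R) (P : 'M[R]_n) (U : set V).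
Hypothesis hP : is_orth_proj (Tsp G xs) P.
Hypothesis hM : M = [set y | Tsp G xs (y - xs)].
Hypothesis hC2 : C2_on U Gt.
Hypothesis hGU : forall y, U y -> M y -> G y = (Gt y)%:E.

Definition grad (y : V) : V := \col_i pder Gt i y.

Lemma openU y : U y -> exists2 r : R, 0 < r & forall z, `|y - z| < r -> U z.
Proof.
move=> Uy; have [oU _] := hC2.
have : \forall z \near y, U z by apply: oU.
by move/nearxP.
Qed.

Lemma grad_sum (y d : V) : \sum_i pder Gt i y * d i 0 = dot (grad y) d.
Proof. by rewrite /dot; apply: eq_bigr => i _; rewrite mxE. Qed.

Lemma lemA y u v : U y -> M y -> subdiff G y u -> P *m v = v -> dot u v = dot (grad y) v.
Proof.
move=> Uy My [Gyf Hu] Pv.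
have [r r0 Hr] := openU Uy.
have Tv : Tsp G xs v by case: hP => _ [_ H]; apply/H.
have Mline : forall s, M (y + s *: v).
  move=> s; rewrite hM /=; rewrite hM /= in My.
  by rewrite addrAC; apply: TspD => //; apply: TspZ.
have key : forall s, `|y - (y + s *: v)| < r -> s * dot u v <= Gt (y + s *: v) - Gt y.
  move=> s hs; have := Hu (y + s *: v).
  rewrite (hGU Uy My) (hGU (Hr _ hs) (Mline s)) addrAC subrr add0r dotZr.
  by rewrite -EFinD lee_fin lerBrDl addrC.
have Hder : forall z, `|y - z| < r -> forall i, derivable Gt z (ebasis R i).
  move=> z hz i; have [_ H] := hC2; have [_ [H2 _]] := H z (Hr _ hz).
  by case: (H2 i).
have Hcont : forall i, {for y, continuous (pder Gt i)}.
  move=> i; have [_ H] := hC2; have [_ [H2 _]] := H y Uy.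
  by case: (H2 i).
apply/eqP; rewrite -subr_eq0; apply/eqP; apply: small0 => e e0.
have [->|v0] := eqVneq v 0; first by rewrite !dot0r subrr normr0 ltW.
have nv : 0 < `|v| by rewrite normr_gt0.
have [del del0 Hdel] := expand r0 Hder Hcont (divr_gt0 e0 nv).
pose m := Num.min del r.
have m0 : 0 < m by rewrite lt_min del0 r0.
have mdel : m <= del by rewrite /m ge_min lexx.
have mr : m <= r by rewrite /m ge_min lexx orbT.
pose t := m / (2 * `|v|).
have t0 : 0 < t by rewrite divr_gt0 // mulr_gt0.
have ntv : forall s, `|s| = t -> `|s *: v| < m.
  move=> s hs; rewrite normrZ hs /t invfM !mulrA mulfVK ?gt_eqF //.
  lra.
have bound : forall s, `|s| = t -> s * (dot u v - dot (grad y) v) <= e * t.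
  move=> s hs; have hsm := ntv s hs.
  have h1 : `|y - (y + s *: v)| < r.
    by rewrite opprD addrA subrr sub0r normrN (lt_le_trans hsm).
  have := key s h1.
  have := Hdel (s *: v) (lt_le_trans hsm mdel).
  rewrite grad_sum dotZr normrZ hs [t * _]mulrC mulrA mulfVK ?gt_eqF //.
  rewrite ler_norml => /andP[_ h2] h3.
  lra.
have b1 := bound t (gtr0_norm t0).
have b2 : (- t) * (dot u v - dot (grad y) v) <= e * t by apply: bound; rewrite normrN gtr0_norm.
rewrite ler_norml; apply/andP; split; nra.
Qed.


Lemma orth_transfer (S S' : set V) : (forall v, S v <-> S' v) -> is_orth_proj S P -> is_orth_proj S' P.
Proof. by move=> E [h1 [h2 h3]]; split => //; split => // v; rewrite -E. Qed.

Lemma Mxs : M xs.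
Proof. by rewrite hM /= subrr; apply: Tsp0. Qed.

Lemma MPh h : M (xs + P *m h).
Proof. by rewrite hM /= addrAC subrr add0r; apply: proj_range hP. Qed.

Lemma Tsub y : U y -> M y -> forall v, Tsp G xs v -> Tsp G y v.
Proof.
move=> Uy My v Tv u1 u2 h1 h2.
have Pv : P *m v = v by apply: proj_fix hP Tv.
by rewrite dotBl (lemA Uy My h1 Pv) (lemA Uy My h2 Pv) subrr.
Qed.

Lemma eG_grad y u : U y -> M y -> (forall v, Tsp G y v -> Tsp G xs v) ->
  subdiff G y u -> eG G y = P *m grad y.
Proof.
move=> Uy My Hsub hu.
have hPy : is_orth_proj (Tsp G y) P.
  apply: orth_transfer hP => v; split; [exact: Tsub | exact: Hsub].
rewrite (eG_eq hPy hu); apply/eqP; rewrite -subr_eq0 -mulmxBr; apply/eqP.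
apply: dot0P => w; have [PT [PP _]] := hP.
rewrite dot_sym_proj // dotBl (lemA Uy My hu) ?subrr //.
by rewrite mulmxA PP.
Qed.


Hypothesis hinner : forall u, subdiff G xs u -> forall eps : R, 0 < eps ->
     \forall y \near xs, M y -> exists u', subdiff G y u' /\ `|u' - u| < eps.

Lemma row_dot k (D : 'M[R]_(k, n)) (z : V) j : (D *m z) j 0 = dot (row j D)^T z.
Proof. by rewrite mxE /dot; apply: eq_bigr => i _; rewrite !mxE. Qed.

Lemma lemB : exists2 del : R, 0 < del & forall y, `|xs - y| < del -> U y -> M y ->
  forall v, Tsp G y v -> Tsp G xs v.
Proof.
pose Dset d := exists u1 u2, subdiff G xs u1 /\ subdiff G xs u2 /\ d = u1 - u2.
have [k [D [hrows hspan]]] := finite_span Dset.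
have [A hA] : exists A : 'M[R]_(n, k), 1%:M - P = A *m D.
  apply: (Q_factor hspan _ hP) => v H u1 u2 h1 h2; apply: H; by exists u1, u2.
have : forall j, exists p : V * V, subdiff G xs p.1 /\ subdiff G xs p.2 /\ (row j D)^T = p.1 - p.2.
  by move=> j; have [u1 [u2 [h1 [h2 e]]]] := hrows j; exists (u1, u2).
case/choice => uu huu.
pose K := k%:R * `|A| * n%:R.
have K0 : 0 <= K by rewrite !mulr_ge0.
pose eps := (4 * (K + 1))^-1.
have eps0 : 0 < eps by rewrite invr_gt0 mulr_gt0 // ltr_wpDl.
have epsE : eps * (4 * (K + 1)) = 1 by rewrite mulVf // gt_eqF // mulr_gt0 // ltr_wpDl.
have : \forall y \near xs, forall j, (M y -> exists w, subdiff G y w /\ `|w - (uu j).1| < eps) /\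
                                   (M y -> exists w, subdiff G y w /\ `|w - (uu j).2| < eps).
  apply: (@filter_forall _ _ (fun j y => (M y -> exists w, subdiff G y w /\ `|w - (uu j).1| < eps) /\
                                   (M y -> exists w, subdiff G y w /\ `|w - (uu j).2| < eps)) (nbhs xs)) => j.
  have [h1 [h2 _]] := huu j.
  by apply: filterS2 (hinner h1 eps0) (hinner h2 eps0) => y a b; split.
move/nearxP => [del del0 Hdel]; exists del => // y hy Uy My v Tyv.
have : forall j, exists p : V * V, (subdiff G y p.1 /\ `|p.1 - (uu j).1| < eps) /\
                                   (subdiff G y p.2 /\ `|p.2 - (uu j).2| < eps).
  move=> j; have [a b] := Hdel y hy j.
  by have [w1 h1] := a My; have [w2 h2] := b My; exists (w1, w2).
case/choice => ww hww.
have [PT [PP hPS]] := hP.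
pose z := v - P *m v.
have Tyz : Tsp G y z by apply: TspB => //; apply: Tsub => //; apply: proj_range hP.
have Dz : `|D *m z| <= n%:R * (2 * eps) * `|z|.
  apply: mnorm_le => [|j b]; first by rewrite !mulr_ge0 // ltW.
  rewrite (ord1 b) row_dot.
  have [_ [_ e]] := huu j.
  have [[hw1 n1] [hw2 n2]] := hww j.
  have -> : dot (row j D)^T z = dot (((uu j).1 - (ww j).1) - ((uu j).2 - (ww j).2)) z.
    have -> : ((uu j).1 - (ww j).1) - ((uu j).2 - (ww j).2) = ((uu j).1 - (uu j).2) - ((ww j).1 - (ww j).2).
      by apply/matrixP => a c; rewrite !mxE; lra.
    by rewrite e [in RHS]dotBl (Tyz _ _ hw1 hw2) subr0.
  apply: le_trans (dot_le _ _) _; rewrite ler_wpM2r // ler_wpM2l //.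
  apply: le_trans (ler_normB _ _) _.
  rewrite -(distrC (ww j).1) -(distrC (ww j).2).
  by rewrite mulr2n mulrDl mul1r lerD // ltW.
have Qz : z = A *m (D *m z).
  by rewrite mulmxA -hA mulmxBl mul1mx /z mulmxBr mulmxA PP subrr subr0.
have nz : `|z| <= K * (2 * eps) * `|z|.
  rewrite {1}Qz; apply: le_trans (mulmx_le _ _) _.
  rewrite /K -!mulrA ler_wpM2l // ler_wpM2l //.
  by apply: le_trans Dz _; rewrite !mulrA.
have : `|z| = 0.
  have nz0 := normr_ge0 z.
  nra.
move/eqP; rewrite normr_eq0 /z subr_eq0 => /eqP Ev.
by apply/hPS.
Qed.


Variable u0 : V.
Hypothesis hu0 : subdiff G xs u0.
Hypothesis hUxs : U xs.

Lemma good : exists2 del : R, 0 < del & forall h : V, `|h| < del ->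
  (exists u, subdiff G (xs + P *m h) u) /\ eG G (xs + P *m h) = P *m grad (xs + P *m h)
  /\ U (xs + P *m h).
Proof.
have [dB dB0 HB] := lemB.
have [rU rU0 HU] := openU hUxs.
have [dI dI0 HI] := (nearxP _ _).1 (hinner hu0 ltr01).
pose c := n%:R * `|P| + 1.
have c0 : 0 < c by rewrite ltr_wpDl // mulr_ge0.
pose m := Num.min dB (Num.min rU dI).
have m0 : 0 < m by rewrite !lt_min dB0 rU0 dI0.
exists (m / c); first by rewrite divr_gt0.
move=> h hh.
have hy : `|xs - (xs + P *m h)| < m.
  rewrite opprD addrA subrr sub0r normrN.
  apply: le_lt_trans (mulmx_le _ _) _.
  have hc : n%:R * `|P| <= c by rewrite lerDl.
  apply: le_lt_trans (_ : c * `|h| < _); last by move: hh; rewrite ltr_pdivlMr // mulrC.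
  by rewrite ler_wpM2r.
have hB : `|xs - (xs + P *m h)| < dB by apply: lt_le_trans hy _; rewrite ge_min lexx.
have hU : `|xs - (xs + P *m h)| < rU by apply: lt_le_trans hy _; rewrite !ge_min lexx orbT.
have hI : `|xs - (xs + P *m h)| < dI by apply: lt_le_trans hy _; rewrite !ge_min lexx !orbT.
have Uy := HU _ hU.
have [u [hu _]] := HI _ hI (MPh h).
split; first by exists u.
split => //; apply: eG_grad hu => //; first exact: MPh.
exact: (HB _ hB Uy (MPh h)).
Qed.

Lemma eGxs : eG G xs = P *m grad xs.
Proof. by apply: eG_grad hu0 => //; exact: Mxs. Qed.


Lemma claim1 : forall eps : R, 0 < eps -> exists2 del : R, 0 < del & forall h : V, `|h| < del ->
  `| eG G (xs + P *m h) - eG G xs - P *m hessian Gt xs *m P *m h | <= eps * `|h|.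
Proof.
move=> eps e0.
pose c1 := n%:R * `|P|.
have c10 : 0 <= c1 by rewrite mulr_ge0.
pose e' := eps / (c1 * c1 + 1).
have e'0 : 0 < e' by rewrite divr_gt0 // ltr_wpDl // mulr_ge0.
have [rU rU0 HU] := openU hUxs.
have HE' : forall i, \forall d \near (0 : V),
   `|pder Gt i (xs + d) - pder Gt i xs - \sum_j pder (pder Gt i) j xs * d j 0| <= e' * `|d|.
  move=> i.
  have H1 : forall z, `|xs - z| < rU -> forall j, derivable (pder Gt i) z (ebasis R j).
    move=> z hz j; have [_ H] := hC2; have [_ [_ H3]] := H z (HU _ hz).
    by case: (H3 i j).
  have H2 : forall j, {for xs, continuous (pder (pder Gt i) j)}.
    move=> j; have [_ H] := hC2; have [_ [_ H3]] := H xs hUxs.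
    by case: (H3 i j).
  have [d d0 Hd] := expand rU0 H1 H2 e'0.
  by apply/near0P; exists d.
have HE : \forall d \near (0 : V), forall i,
   `|pder Gt i (xs + d) - pder Gt i xs - \sum_j pder (pder Gt i) j xs * d j 0| <= e' * `|d|.
  exact: filter_forall HE'.
have [dE dE0 HdE] := (near0P _).1 HE.
have [dg dg0 Hg] := good.
pose m := Num.min dg (dE / (c1 + 1)).
have m0 : 0 < m by rewrite lt_min dg0 divr_gt0 // ltr_wpDl.
exists m => // h hh.
have hg : `|h| < dg by apply: lt_le_trans hh _; rewrite ge_min lexx.
have [_ [E1 _]] := Hg h hg.
have hd : `|P *m h| <= c1 * `|h| by apply: mulmx_le.
have hdE : `|P *m h| < dE.
  apply: le_lt_trans hd _.
  have : `|h| < dE / (c1 + 1) by apply: lt_le_trans hh _; rewrite ge_min lexx orbT.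
  rewrite ltr_pdivlMr ?ltr_wpDl // => H.
  apply: le_lt_trans H; have := normr_ge0 h; nra.
have Hw := HdE _ hdE.
pose w := grad (xs + P *m h) - grad xs - hessian Gt xs *m (P *m h).
have Ew : eG G (xs + P *m h) - eG G xs - P *m hessian Gt xs *m P *m h = P *m w.
  by rewrite E1 eGxs /w !mulmxBr !mulmxA.
have nw : `|w| <= e' * `|P *m h|.
  apply: mnorm_le => [|i b]; first by rewrite mulr_ge0 // ltW.
  rewrite (ord1 b) /w !mxE.
  have -> : \sum_j hessian Gt xs i j * (P *m h) j 0 = \sum_j pder (pder Gt i) j xs * (P *m h) j 0.
    by apply: eq_bigr => j _; rewrite mxE.
  exact: Hw.
rewrite Ew; apply: le_trans (mulmx_le _ _) _.
rewrite -/c1.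
apply: le_trans (_ : c1 * (e' * (c1 * `|h|)) <= _).
  rewrite ler_wpM2l //; apply: le_trans nw _; rewrite ler_wpM2l // ltW //.
rewrite mulrA mulrA ler_wpM2r //.
rewrite (mulrC c1) -mulrA /e' mulrAC ler_pdivrMr ?ltr_wpDl ?mulr_ge0 //.
have : 0 <= c1 * c1 by rewrite mulr_ge0.
nra.
Qed.


Lemma mono : (exists2 dg : R, 0 < dg & forall h : V, `|h| < dg ->
   0 <= dot (eG G (xs + P *m h) - eG G xs) h).
Proof.
have [dg dg0 Hg] := good; exists dg => // h hh.
have [[u hu] [E1 Uy]] := Hg h hh.
have My := MPh h.
have PPh : P *m (P *m h) = P *m h by rewrite mulmxA; case: hP => _ [-> _].
have [PT _] := hP.
rewrite E1 eGxs -mulmxBr dot_sym_proj // dotBl -(lemA Uy My hu PPh) -(lemA hUxs Mxs hu0 PPh).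
have [fy Hy] := hu; have [fx Hx] := hu0.
have h1 := Hy xs; have h2 := Hx (xs + P *m h).
rewrite -(fineK fy) -(fineK fx) -!EFinD lee_fin in h1.
rewrite -(fineK fy) -(fineK fx) -!EFinD lee_fin in h2.
move: h1 h2; rewrite addrAC subrr add0r opprD addrA subrr sub0r dotC dotNl (dotC (P *m h)).
lra.
Qed.

Lemma claim2 h : 0 <= dot (P *m hessian Gt xs *m P *m h) h.
Proof.
set B := P *m hessian Gt xs *m P.
apply/ler_addgt0Pr => e e0.
have [->|h0] := eqVneq h 0; first by rewrite dot0r add0r ltW.
pose c := `|h|.
have c0 : 0 < c by rewrite normr_gt0.
pose eta := e / (n%:R * c * c + 1).
have eta0 : 0 < eta by rewrite divr_gt0 // ltr_wpDl // !mulr_ge0 // ltW.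
have etaE : n%:R * c * c * eta <= e.
  have Kp : 0 <= n%:R * c * c by rewrite !mulr_ge0 // ltW.
  by rewrite /eta mulrCA ger_pMr // ler_pdivrMr ?ltr_wpDl // mul1r lerDl ler01.
have [d1 d10 H1] := claim1 eta0.
have [dg dg0 Hg] := mono.
pose m := Num.min d1 dg.
have m0 : 0 < m by rewrite lt_min d10 dg0.
pose t := m / (2 * c).
have t0 : 0 < t by rewrite divr_gt0 // mulr_gt0.
have nth : `|t *: h| = m / 2.
  by rewrite normrZ gtr0_norm // /t invfM !mulrA mulfVK ?gt_eqF.
have md1 : m <= d1 by rewrite ge_min lexx.
have mdg : m <= dg by rewrite ge_min lexx orbT.
have hth1 : `|t *: h| < d1 by rewrite nth; lra.
have hthg : `|t *: h| < dg by rewrite nth; lra.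
have C1 := H1 _ hth1.
have M1 := Hg _ hthg.
set r := eG G (xs + P *m (t *: h)) - eG G xs - B *m (t *: h) in C1.
have Er : eG G (xs + P *m (t *: h)) - eG G xs = r + t *: (B *m h).
  by rewrite /r scalemxAr subrK.
rewrite Er dotZr dotDl dotZl in M1.
have M2 : 0 <= dot r h + t * dot (B *m h) h by rewrite -(pmulr_rge0 _ t0).
have Dle : `|dot r h| <= n%:R * (eta * (t * c)) * c.
  apply: le_trans (dot_le _ _) _.
  rewrite ler_wpM2r // ler_wpM2l //.
  by apply: le_trans C1 _; rewrite normrZ gtr0_norm.
move: Dle; rewrite ler_norml => /andP[_ D1].
have Kt : n%:R * (eta * (t * c)) * c = (n%:R * c * c * eta) * t.
  by ring.
rewrite Kt in D1.
have h3 : n%:R * c * c * eta * t <= e * t.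
  by rewrite (ler_pM2r t0).
have h4 : 0 <= t * (dot (B *m h) h + e).
  rewrite mulrDr (mulrC t e).
  move: M2 D1 h3; set K := n%:R * c * c * eta * t; set D := dot r h; set ta := t * dot (B *m h) h; set et := e * t.
  lra.
by rewrite -(pmulr_rge0 _ t0).
Qed.

End Main.

Unset Implicit Arguments.

Theorem lemma4p6 (R : realType) (n : nat) (G : 'cV[R]_n -> \bar R)
  (xs : 'cV[R]_n) (M : set 'cV[R]_n) (Gt : 'cV[R]_n -> R) (P : 'M[R]_n) :
  Gamma0 G ->
  partly_smooth_affine G xs M ->
  C2_representative G Gt xs M ->
  is_orth_proj (Tsp G xs) P ->
  (forall eps : R, 0 < eps ->
     \forall h \near (0 : 'cV[R]_n),
       `| eG G (xs + P *m h) - eG G xs - P *m hessian Gt xs *m P *m h | <= eps * `|h|)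
  /\
  (forall h : 'cV[R]_n, 0 <= dot (P *m hessian Gt xs *m P *m h) h).
Proof.
move=> _ [[u0 hu0] [haff [_ [hinner _]]]] [U [hUxs [hC2 hGU]]] hP.
split.
- move=> eps e0.
  have [del del0 H] := claim1 hP haff hC2 hGU hinner hu0 hUxs e0.
  by apply/near0P; exists del.
- by move=> h; apply: (claim2 hP haff hC2 hGU hinner hu0 hUxs).
Qed.
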